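(* Let $G,H$ be locally compact second countable unimodular groups and $(\Omega,\mu)$ a $(G,H)$-coupling with associated maps $i\colon G\times Y\to\Omega$, $j\colon H\times X\to\Omega$. Then the associated cocycles $\omega_H\colon G\times X\to H$ and $\omega_G\colon H\times Y\to G$ are (essentially) locally bounded Borel maps.
   Context: A Borel map is locally bounded if it maps relatively compact sets to relatively compact sets. A $(G,H)$-coupling is a standard Borel measure space $(\Omega,\mu)$ (standard meaning: Borel isomorphic, via a map $\varphi$ with $\varphi,\varphi^{-1}$ locally bounded, onto a closed subset of $\mathbb{R}\sqcup\mathbb{Z}$ with $\varphi_*\mu$ equivalent to Lebesgue+counting measure on the range) with a locally bounded Borel action of $G\times H$, and measure preserving Borel isomorphisms $i\colon (G,\lambda_G)\times(Y,\mu_Y)\to\Omega$, $j\colon (H,\lambda_H)\times(X,\mu_X)\to\Omega$ with $X,Y$ standard and $0<\mu_X(X),\mu_Y(Y)<\infty$, such that $i,i^{-1},j,j^{-1}$ are locally bounded and essentially $G$- resp. $H$-equivariant ($i(g_0g,y)=g_0.i(g,y)$ for a.e. $y$ and all $g_0,g$; analogously for $j$). The induced $G$-action on $X$ is defined (a.e.) by $g.j(H\times\{x\})=j(H\times\{g.x\})$, and similarly $H$ acts on $Y$. The cocycle $\omega_H$ is defined by $g.j(h,x)=j(h\,\omega_H(g,x)^{-1},g.x)$ for a.e. $x\in X$ and all $h\in H$ (and set to the identity on a null set), and $\omega_G$ by $h.i(g,y)=i(g\,\omega_G(h,y)^{-1},h.y)$ for a.e. $y\in Y$ and all $g\in G$.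 *)

(* Defs.v *)
From mathcomp Require Import all_boot all_order all_algebra.
From mathcomp Require Import all_classical all_reals all_analysis.
Import Order.TTheory GRing.Theory Num.Theory.
Import numFieldNormedType.Exports.
Set Implicit Arguments. Unset Strict Implicit. Unset Printing Implicit Defensive.
Local Open Scope classical_set_scope.
Local Open Scope ring_scope.

Section Defs.
Variable R : realType.

Definition borelS (T : topologicalType) : set (set T) := <<s @open T >>.

Definition prod_borelS (T U : topologicalType) : set (set (T * U)) :=
  <<s [set C | exists A B, borelS A /\ borelS B /\ C = A `*` B] >>.

Definition borel_map (T U : topologicalType) (f : T -> U) :=
  forall B, borelS B -> borelS (f @^-1` B).
Definition borel_map2 (T1 T2 U : topologicalType) (f : T1 * T2 -> U) :=
  forall B, borelS B -> prod_borelS (f @^-1` B).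

Definition locally_bounded (T U : topologicalType) (f : T -> U) :=
  forall A, precompact A -> precompact (f @` A).

Definition borel_measure (T : topologicalType) (mu : set T -> \bar R) :=
  [/\ mu set0 = 0%E,
      (forall A, borelS A -> (0 <= mu A)%E) &
      (forall F : nat -> set T, (forall n, borelS (F n)) -> trivIset setT F ->
         (fun n => \sum_(0 <= k < n) mu (F k))%E @ \oo --> mu (\bigcup_n F n))].

Definition mu_null (T : topologicalType) (mu : set T -> \bar R) (N : set T) :=
  exists2 B, borelS B & N `<=` B /\ mu B = 0%E.

Definition lcsc_group (G : topologicalType) (mul : G -> G -> G) (inv : G -> G)
    (one : G) :=
  [/\ (forall x y z, mul x (mul y z) = mul (mul x y) z),
      (forall x, mul one x = x /\ mul x one = x),
      (forall x, mul (inv x) x = one /\ mul x (inv x) = one),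
      continuous (fun p : G * G => mul p.1 p.2) /\ continuous inv &
      [/\ hausdorff_space G, locally_compact [set: G] & @second_countable G]].

(** [lam] is a Haar measure on G (nonzero, left invariant, finite on compacts)
    and G is unimodular (the Haar measure is also right invariant). *)
Definition unimodular_haar (G : topologicalType) (mul : G -> G -> G)
    (lam : set G -> \bar R) :=
  [/\ borel_measure lam,
      (forall K, compact K -> (lam K < +oo)%E),
      (exists2 A, borelS A & (0 < lam A)%E),
      (forall g A, borelS A -> lam (mul g @` A) = lam A) &
      (forall g A, borelS A -> lam ((fun x => mul x g) @` A) = lam A)].

(** The model space R ⊔ Z, encoded as [R + int]; its relatively compact,
    closed and Borel sets, and the measure class of Lebesgue + counting. *)
Definition RZ_R (S : set (R + int)) : set R := [set r | S (inl r)].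
Definition RZ_Z (S : set (R + int)) : set int := [set z | S (inr z)].
Definition RZ_relcompact (S : set (R + int)) :=
  (exists M : R, forall r, RZ_R S r -> `|r| <= M) /\ finite_set (RZ_Z S).
Definition RZ_closed (S : set (R + int)) := closed (RZ_R S).
Definition RZ_borel (S : set (R + int)) := measurable (RZ_R S).
Definition RZ_null (S : set (R + int)) :=
  lebesgue_measure (RZ_R S) = 0%E /\ RZ_Z S = set0.

(** Standard measure space: a Borel isomorphism [phi] onto a closed subset of
    R ⊔ Z with [phi], [phi^-1] locally bounded, such that [phi_* mu] is
    equivalent to (Lebesgue + counting) restricted to the range. *)
Definition standard (T : topologicalType) (mu : set T -> \bar R) :=
  borel_measure mu /\
  exists phi : T -> R + int,
  [/\ injective phi /\ RZ_closed (range phi),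
      (forall S, RZ_borel S -> borelS (phi @^-1` S)) /\
      (forall A, borelS A -> RZ_borel (phi @` A)),
      (forall A, precompact A -> RZ_relcompact (phi @` A)),
      (forall S, RZ_relcompact S -> precompact (phi @^-1` S)) &
      (forall A, borelS A -> (mu A = 0%E <-> RZ_null (phi @` A)))].

Definition lb_borel_iso (T1 T2 U : topologicalType) (f : T1 * T2 -> U) :=
  exists f' : U -> T1 * T2,
  [/\ cancel f f' /\ cancel f' f, borel_map2 f,
      (forall B, prod_borelS B -> borelS (f' @^-1` B)),
      locally_bounded f & locally_bounded f'].

(** measure preserving from (lam x nu) to mu (tested on Borel rectangles,
    which determines the product measure). *)
Definition meas_pres (T1 T2 U : topologicalType) (f : T1 * T2 -> U)
    (lam : set T1 -> \bar R) (nu : set T2 -> \bar R) (mu : set U -> \bar R) :=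
  forall A B, borelS A -> borelS B -> mu (f @` (A `*` B)) = (lam A * nu B)%E.

(** (G,H)-coupling data. [aG], [aH] are the actions of G and H on Omega
    (together they form the action of G x H: (g,h).w = aG g (aH h w)). *)
Definition coupling (G H Om X Y : topologicalType)
    (mulG : G -> G -> G) (oneG : G) (mulH : H -> H -> H) (oneH : H)
    (lamG : set G -> \bar R) (lamH : set H -> \bar R)
    (mu : set Om -> \bar R) (muX : set X -> \bar R) (muY : set Y -> \bar R)
    (aG : G -> Om -> Om) (aH : H -> Om -> Om)
    (i : G * Y -> Om) (j : H * X -> Om) :=
  [/\ standard mu /\ standard muX /\ standard muY,
      (0 < muX setT < +oo)%E /\ (0 < muY setT < +oo)%E,
      [/\ (forall w, aG oneG w = w) /\ (forall w, aH oneH w = w),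
          (forall g g' w, aG (mulG g g') w = aG g (aG g' w)) /\
          (forall h h' w, aH (mulH h h') w = aH h (aH h' w)),
          (forall g h w, aG g (aH h w) = aH h (aG g w)),
          borel_map2 (fun p : (G * H) * Om => aG p.1.1 (aH p.1.2 p.2)) &
          locally_bounded (fun p : (G * H) * Om => aG p.1.1 (aH p.1.2 p.2))],
      lb_borel_iso i /\ meas_pres i lamG muY mu /\
      (exists2 N, mu_null muY N & forall y, ~ N y ->
         forall g0 g, i (mulG g0 g, y) = aG g0 (i (g, y))) &
      lb_borel_iso j /\ meas_pres j lamH muX mu /\
      (exists2 N, mu_null muX N & forall x, ~ N x ->
         forall h0 h, j (mulH h0 h, x) = aH h0 (j (h, x)))].

Definition is_cocycle (G H Om X : topologicalType)
    (mulH : H -> H -> H) (invH : H -> H)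
    (muX : set X -> \bar R) (aG : G -> Om -> Om) (j : H * X -> Om)
    (aX : G -> X -> X) (w : G -> X -> H) :=
  exists2 N, mu_null muX N & forall x, ~ N x -> forall g h,
    aG g (j (h, x)) = j (mulH h (invH (w g x)), aX g x).

(** essentially locally bounded Borel: after setting it to the identity
    outside a conull Borel set, the map is Borel and locally bounded. *)
Definition ess_lb_borel (G X H : topologicalType) (oneH : H)
    (muX : set X -> \bar R) (w : G -> X -> H) :=
  exists X1 : set X, [/\ borelS X1, muX (~` X1) = 0%E,
    borel_map2 (fun p : G * X => if pselect (X1 p.2) then w p.1 p.2 else oneH) &
    locally_bounded (fun p : G * X => if pselect (X1 p.2) then w p.1 p.2 else oneH)].

End Defs.

(* Main.v *)
Require Import Defs.
From mathcomp Require Import all_boot all_order all_algebra.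
From mathcomp Require Import all_classical all_reals all_analysis.
Import Order.TTheory GRing.Theory Num.Theory.
Set Implicit Arguments. Unset Strict Implicit. Unset Printing Implicit Defensive.
Local Open Scope classical_set_scope.
Lemma fst_cont (T U : topologicalType) : continuous (@fst T U).
Proof. move=> p; exact: cvg_fst. Qed.
Lemma snd_cont (T U : topologicalType) : continuous (@snd T U).
Proof. move=> p; exact: cvg_snd. Qed.

Lemma pc_ex (T : topologicalType) (A : set T) :
  precompact A <-> exists2 K, A `<=` K & compact K /\ closed K.
Proof. by []. Qed.

Lemma pc_snd (T U : topologicalType) (A : set (T * U)) :
  precompact A -> precompact (snd @` A).
Proof.
move=> [K AK [cK clK]].
rewrite precompactE.
have cs : compact (snd @` K).
  by apply: continuous_compact cK; apply: continuous_subspaceT; exact: snd_cont.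
apply: (@subclosed_compact _ _ _ (@closed_closure _ _) cs).
move=> y; rewrite closureEcvg => -[G PG [Gy GA]].
have GsA : G (snd @` A) by apply: GA.
pose F' := filter_from G (fun B => A `&` snd @^-1` B).
have FF' : ProperFilter F'.
  apply: filter_from_proper.
    apply: filter_from_filter; first by exists setT; exact: filterT.
    by move=> i j Gi Gj; exists (i `&` j); [exact: filterI|move=> z [Az [/= ? ?]]].
  move=> B GB; have [b [[[t b'] At /= <-] Bb]] := filter_ex (filterI GsA GB).
  by exists (t, b').
have [U0 [UU sFU]] := ultraFilterLemma FF'.
have U0K : U0 K by apply: sFU; exists setT; [exact: filterT|move=> z [/AK]].
move: cK; rewrite compact_ultra => /= cKu.
have [p [Kp Up]] := cKu U0 UU U0K.
have Usnd : snd @ U0 --> y.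
  move=> B /Gy GB; apply: sFU; exists B => //; by move=> z [].
have Ufst : fst @ U0 --> p.1.
  by move=> B /(@fst_cont T U p) /Up.
have Upair : (fun x : T * U => (x.1, x.2)) @ U0 --> (p.1, y).
  by apply: cvg_pair.
have : K (p.1, y).
  have := @closed_cvg _ _ U0 _ (fun x : T * U => (x.1, x.2)) K clK.
  move=> /(_ ultra_proper) H; apply: (H _ (p.1, y) Upair).
  by apply: filterS U0K => -[].
by move=> Kpy; exists (p.1, y).
Qed.
Lemma sig_pre (T U : Type) (Gen : set (set U)) (S : set (set T)) (f : T -> U) :
  sigma_algebra setT S -> (forall B, Gen B -> S (f @^-1` B)) ->
  forall B, <<s Gen >> B -> S (f @^-1` B).
Proof.
move=> [S0 SC SU] hG B; apply: (smallest_sub (X := [set B | S (f @^-1` B)])) => //.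
split => /=.
- by rewrite preimage_set0.
- by move=> A SA; rewrite setTD preimage_setC -setTD; exact: SC.
- by move=> F SF; rewrite preimage_bigcup; exact: SU.
Qed.

Lemma sgU (T : Type) (G : set (set T)) A B :
  <<s G >> A -> <<s G >> B -> <<s G >> (A `|` B).
Proof.
move=> hA hB.
have -> : A `|` B = \bigcup_n (if n == 0%N then A else B).
  apply/seteqP; split => [x [Ax|Bx]|x [n _]]; first by exists 0%N.
    by exists 1%N.
  by case: (n == 0%N) => ?; [left|right].
by apply: sigma_algebra_bigcup => n; case: (n == 0%N).
Qed.

Lemma sgC (T : Type) (G : set (set T)) A : <<s G >> A -> <<s G >> (~` A).
Proof. by move=> hA; rewrite -setTD; exact: sigma_algebraCD. Qed.

Lemma sgI (T : Type) (G : set (set T)) A B :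
  <<s G >> A -> <<s G >> B -> <<s G >> (A `&` B).
Proof.
move=> hA hB; rewrite -[A `&` B]setCK setCI; apply: sgC; apply: sgU; exact: sgC.
Qed.

Lemma sgT (T : Type) (G : set (set T)) : <<s G >> setT.
Proof.
have h := @sigma_algebraCD _ setT G set0 (@sigma_algebra0 _ setT G).
by rewrite setD0 in h.
Qed.

Lemma borel_cont (T U : topologicalType) (f : T -> U) : continuous f -> borel_map f.
Proof.
move=> cf; apply: sig_pre; first exact: smallest_sigma_algebra.
move=> B oB; apply: sub_sigma_algebra.
by move: cf; rewrite continuousP => /(_ B oB).
Qed.

Lemma rectB (T U : topologicalType) (A : set T) (B : set U) :
  borelS A -> borelS B -> prod_borelS (A `*` B).
Proof. by move=> hA hB; apply: sub_sigma_algebra; exists A, B. Qed.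

Lemma sect2 (T U : topologicalType) (c : T) (C : set (T * U)) :
  prod_borelS C -> borelS [set x | C (c, x)].
Proof.
move=> hC; apply: (sig_pre (f := pair c) _ _ hC); first exact: smallest_sigma_algebra.
move=> _ [A [B [hA [hB ->]]]].
case: (pselect (A c)) => Ac.
  by rewrite (_ : _ @^-1` _ = B) //; apply/seteqP; split => x //= [].
rewrite (_ : _ @^-1` _ = set0); first exact: sigma_algebra0.
by apply/seteqP; split => x //= [].
Qed.

Definition sw (T U : Type) (p : T * U) : U * T := (p.2, p.1).
Lemma sw_cont (T U : topologicalType) : continuous (@sw T U).
Proof. exact: swap_continuous. Qed.

Lemma pc_fst (T U : topologicalType) (A : set (T * U)) :
  precompact A -> precompact (fst @` A).
Proof.
move=> hA.
have hs : precompact (@sw T U @` A).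
  move: hA => [K AK [cK clK]].
  exists (@sw T U @` K).
    by move=> _ [z Az <-]; exists z => //; exact: AK.
  split; first by apply: continuous_compact cK; apply: continuous_subspaceT; exact: sw_cont.
  rewrite (_ : _ @` K = @sw U T @^-1` K); last first.
    apply/seteqP; split => [_ [[a b] Kz <-]//|[a b] /= Kz]; by exists (b, a).
  by move/continuous_closedP : (@sw_cont U T) => /(_ K clK).
have := pc_snd hs.
rewrite (_ : _ @` _ = fst @` A) //; apply/seteqP; split.
  by move=> _ [_ [z Az <-] <-]; exists z.
by move=> _ [z Az <-]; exists (sw z) => //; exists z.
Qed.

Lemma pc_setX (T U : topologicalType) (A : set T) (B : set U) :
  precompact A -> precompact B -> precompact (A `*` B).
Proof.
move=> [K1 AK1 [c1 cl1]] [K2 BK2 [c2 cl2]].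
exists (K1 `*` K2); first by move=> [a b] [/= /AK1 ? /BK2 ?].
split; first exact: compact_setX.
rewrite (_ : K1 `*` K2 = fst @^-1` K1 `&` snd @^-1` K2) //.
apply: closedI.
  by move/continuous_closedP : (@fst_cont T U) => /(_ K1 cl1).
by move/continuous_closedP : (@snd_cont T U) => /(_ K2 cl2).
Qed.

Lemma pc_img (T U : topologicalType) (f : T -> U) (A : set T) :
  hausdorff_space U -> continuous f -> precompact A -> precompact (f @` A).
Proof.
move=> hU cf [K AK [cK clK]].
have cfK : compact (f @` K).
  by apply: continuous_compact cK; apply: continuous_subspaceT.
exists (f @` K); first by move=> _ [a Aa <-]; exists a => //; exact: AK.
by split => //; exact: compact_closed.
Qed.

Lemma pc_set1 (T : topologicalType) (x : T) : hausdorff_space T -> precompact [set x].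
Proof.
move=> hT; exists [set x] => //; split; first exact: compact_set1.
by apply: compact_closed => //; exact: compact_set1.
Qed.

Lemma pc_U (T : topologicalType) (A B : set T) :
  precompact A -> precompact B -> precompact (A `|` B).
Proof.
move=> [K1 AK1 [c1 cl1]] [K2 BK2 [c2 cl2]].
exists (K1 `|` K2); first by move=> x [/AK1|/BK2] ?; [left|right].
by split; [exact: compactU|exact: closedU].
Qed.

Lemma key (R : realType) (T A P X Om : topologicalType)
  (mulT : T -> T -> T) (invT : T -> T) (oneT : T)
  (muX : set X -> \bar R) (F : P * Om -> Om) (emb : A -> P) (act : A -> Om -> Om)
  (j : T * X -> Om) (aX : A -> X -> X) (w : A -> X -> T) :
  lcsc_group mulT invT oneT -> continuous emb ->
  (forall S, precompact S -> precompact (emb @` S)) ->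
  borel_map2 F -> locally_bounded F ->
  (forall a o, act a o = F (emb a, o)) -> lb_borel_iso j ->
  is_cocycle mulT invT muX act j aX w -> ess_lb_borel oneT muX w.
Proof.
case=> hassoc hone hinv [_ cinv] [hT _ _] cemb pemb bF lF hact
  [j' [[jK _] bj bj' lj lj']] [N [Bn bBn [NB mBn]] hN].
have invK z : invT (invT z) = z.
  rewrite -[LHS](proj2 (hone _)) -(proj1 (hinv z)) hassoc (proj1 (hinv (invT z))).
  exact: (proj1 (hone z)).
pose E := fun p : A * X => (emb p.1, j (oneT, p.2)).
pose M := fun p : A * X => invT (j' (F (E p))).1.
have hM g x : ~ Bn x -> w g x = M (g, x).
  move=> Bx; rewrite /M /E /= -hact (hN x (fun Nx => Bx (NB _ Nx)) g oneT) jK /=.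
  by rewrite (proj1 (hone _)) invK.
exists (~` Bn); split.
- exact: sgC.
- by rewrite setCK.
- move=> B hB.
  have bM : prod_borelS (M @^-1` B).
    have b1 : borelS (invT @^-1` B) := borel_cont cinv hB.
    have b2 : prod_borelS (fst @^-1` (invT @^-1` B) : set (T * X)).
      rewrite (_ : fst @^-1` _ = (invT @^-1` B) `*` setT).
        by apply: rectB => //; exact: sgT.
      by apply/seteqP; split => -[a b] /=; [move=> ?; split|case].
    have b3 := bj' _ b2.
    have b4 := bF _ b3.
    have b5 : forall C, prod_borelS C -> prod_borelS (E @^-1` C).
      apply: sig_pre; first exact: smallest_sigma_algebra.
      move=> _ [C1 [C2 [h1 [h2 ->]]]].
      rewrite (_ : E @^-1` _ = (emb @^-1` C1) `*` [set x | (j @^-1` C2) (oneT, x)]).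
        apply: rectB; first exact: (borel_cont cemb).
        exact: sect2 (bj _ h2).
      by apply/seteqP; split => -[a b].
    exact: b5 _ b4.
  have bC : borelS (Bn `&` [set _ | B oneT]).
    case: (pselect (B oneT)) => h.
      by rewrite (_ : [set _ | B oneT] = setT) ?setIT //; apply/seteqP; split.
    rewrite (_ : [set _ | B oneT] = set0) ?setI0; first exact: sigma_algebra0.
    by apply/seteqP; split.
  rewrite (_ : _ @^-1` B = (M @^-1` B `&` (setT `*` ~` Bn)) `|`
                          (setT `*` (Bn `&` [set _ | B oneT]))).
    apply: sgU; last by apply: rectB => //; exact: sgT.
    by apply: sgI => //; apply: rectB; [exact: sgT|exact: sgC].
  apply/seteqP; split => -[g x] /=; case: pselect => /= h.
  + by move=> Bw; left; split => //; rewrite -hM.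
  + move=> Bo; right; split => //; split => //.
    by apply: contrapT.
  + by case => [[]|[_ []]]; [rewrite -hM|].
  + by case => [[_ []]|[_ [_]]].
- move=> Ap hAp.
  have p1 := pc_fst hAp.
  have p2 := pc_snd hAp.
  have S1 := pc_setX (pc_set1 oneT hT) p2.
  have S2 := pc_setX (pemb _ p1) (lj _ S1).
  have S6 := pc_img hT cinv (pc_fst (lj' _ (lF _ S2))).
  apply: precompact_subset (pc_U S6 (pc_set1 oneT hT)).
  move=> _ [[g x] Apgx <-] /=; case: pselect => h; [left|by right].
  rewrite hM //.
  exists (j' (F (E (g, x)))).1 => //.
  exists (j' (F (E (g, x)))) => //.
  exists (F (E (g, x))) => //.
  exists (E (g, x)) => //.
  split; first by exists g => //; exists (g, x).
  by exists (oneT, x) => //; split => //; exists (g, x).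
Qed.

Theorem proposition3p9 (R : realType)
  (G H Om X Y : topologicalType)
  (mulG : G -> G -> G) (invG : G -> G) (oneG : G)
  (mulH : H -> H -> H) (invH : H -> H) (oneH : H)
  (lamG : set G -> \bar R) (lamH : set H -> \bar R)
  (mu : set Om -> \bar R) (muX : set X -> \bar R) (muY : set Y -> \bar R)
  (aG : G -> Om -> Om) (aH : H -> Om -> Om)
  (i : G * Y -> Om) (j : H * X -> Om)
  (aX : G -> X -> X) (aY : H -> Y -> Y)
  (omegaH : G -> X -> H) (omegaG : H -> Y -> G) :
  lcsc_group mulG invG oneG -> lcsc_group mulH invH oneH ->
  unimodular_haar mulG lamG -> unimodular_haar mulH lamH ->
  coupling mulG oneG mulH oneH lamG lamH mu muX muY aG aH i j ->
  is_cocycle mulH invH muX aG j aX omegaH ->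
  is_cocycle mulG invG muY aH i aY omegaG ->
  ess_lb_borel oneH muX omegaH /\ ess_lb_borel oneG muY omegaG.
Proof.
move=> lG lH _ _ [_ _ [[hG1 hH1] _ _ bact lact] [iiso _] [jiso _]] cH cG.
have hG : hausdorff_space G by case: lG => _ _ _ _ [].
have hH : hausdorff_space H by case: lH => _ _ _ _ [].
split.
- apply: (key (P := (G * H)%type) (emb := fun g : G => (g, oneH)) lH _ _ bact lact _ jiso cH).
  + by move=> g; apply: cvg_pair; [exact: cvg_id|exact: cvg_cst].
  + move=> S hS; apply: precompact_subset (pc_setX hS (pc_set1 oneH hH)).
    by move=> _ [g Sg <-].
  + by move=> a o /=; rewrite hH1.
- apply: (key (P := (G * H)%type) (emb := fun h : H => (oneG, h)) lG _ _ bact lact _ iiso cG).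
  + by move=> h; apply: cvg_pair; [exact: cvg_cst|exact: cvg_id].
  + move=> S hS; apply: precompact_subset (pc_setX (pc_set1 oneG hG) hS).
    by move=> _ [h Sh <-].
  + by move=> a o /=; rewrite hG1.
Qed.
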